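(* Let $X$ and $Y$ be metrizable spaces that are locally compact and $\sigma$-compact, let $G$ be a group, and let $\varphi\colon G\times X\to X$ and $\psi\colon G\times Y\to Y$ be metric-independent expansive (MIE) actions. Then the coproduct action of $G$ on the disjoint union $X\sqcup Y$ (acting by $\varphi$ on $X$ and by $\psi$ on $Y$) is MIE.
   Context: For a metric $d$ on a space $Z$, an action of $G$ on $Z$ is expansive with respect to $d$ if there is $c>0$ such that for all $x\neq y$ in $Z$ there is $g\in G$ with $d(g\cdot x,g\cdot y)>c$. The action is metric-independent expansive (MIE) if it is expansive with respect to every metric compatible with the topology of $Z$. *)

(* Defs.v *)
From HB Require Import structures.
From mathcomp Require Import all_boot all_order all_algebra.
From mathcomp Require Import all_classical all_reals all_analysis.
Set Implicit Arguments. Unset Strict Implicit. Unset Printing Implicit Defensive.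
Import Order.TTheory GRing.Theory Num.Theory.
Local Open Scope classical_set_scope.
Local Open Scope ring_scope.

Definition is_group (G : Type) (mul : G -> G -> G) (one : G) (inv : G -> G) :=
  [/\ forall a b c, mul a (mul b c) = mul (mul a b) c,
      forall a, mul one a = a,
      forall a, mul a one = a,
      forall a, mul (inv a) a = one &
      forall a, mul a (inv a) = one].

Definition is_action (G T : Type) (mul : G -> G -> G) (one : G)
  (act : G -> T -> T) :=
  (forall x, act one x = x) /\
  (forall g h x, act (mul g h) x = act g (act h x)).

(* A continuous action on a topological space (action by homeomorphisms,
   G carrying the discrete topology). *)
Definition is_continuous_action (G : Type) (T : topologicalType)
  (mul : G -> G -> G) (one : G) (act : G -> T -> T) :=
  is_action mul one act /\ (forall g, continuous (act g)).

Definition is_metric (R : realType) (T : Type) (d : T -> T -> R) :=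
  [/\ forall x y, d x y = 0 <-> x = y,
      forall x y, d x y = d y x &
      forall x y z, d x z <= d x y + d y z].

Definition compatible_with (R : realType) (T : Type) (op : set T -> Prop)
  (d : T -> T -> R) :=
  forall U : set T,
    op U <-> (forall x, U x -> exists2 e : R, 0 < e & [set y | d x y < e] `<=` U).

Definition expansive_wrt (R : realType) (G T : Type) (act : G -> T -> T)
  (d : T -> T -> R) :=
  exists2 c : R, 0 < c &
    forall x y, x <> y -> exists g, c < d (act g x) (act g y).

Definition MIE_on (R : realType) (G T : Type) (op : set T -> Prop)
  (act : G -> T -> T) :=
  forall d : T -> T -> R, is_metric d -> compatible_with op d ->
    expansive_wrt act d.

Definition MIE (R : realType) (G : Type) (T : topologicalType)
  (act : G -> T -> T) := MIE_on R (@open T) act.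

Definition metrizable (R : realType) (T : topologicalType) :=
  exists d : T -> T -> R, is_metric d /\ compatible_with (@open T) d.

Definition sigma_compact (T : topologicalType) :=
  exists K : nat -> set T, (forall n, compact (K n)) /\ \bigcup_n K n = setT.

Definition sum_open (X Y : topologicalType) (U : set (X + Y)%type) : Prop :=
  open (inl @^-1` U) /\ open (inr @^-1` U).

Definition coprod_action (G : Type) (X Y : Type) (phi : G -> X -> X)
  (psi : G -> Y -> Y) (g : G) (z : X + Y) : X + Y :=
  match z with
  | inl x => inl (phi g x)
  | inr y => inr (psi g y)
  end.

(* Main.v *)
Require Import Defs.
From mathcomp Require Import all_boot all_order all_algebra.
From mathcomp Require Import all_classical all_reals all_analysis.
From mathcomp Require Import lra.
Import Order.TTheory GRing.Theory Num.Theory.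
Local Open Scope classical_set_scope.
Local Open Scope ring_scope.

Lemma metric_ge0 {R : realType} (T : Type) (d : T -> T -> R) :
  is_metric d -> forall x y, 0 <= d x y.
Proof.
case=> h0 hs ht x y.
have := ht x y x; rewrite (proj2 (h0 x x) erefl) (hs y x) => h.
have : 0 <= d x y + d x y by [].
by rewrite -mulr2n pmulrn_lge0.
Qed.

Lemma compat_restr (R : realType) (T : Type) (op : set T -> Prop)
  (A : topologicalType) (i : A -> T) (d : T -> T -> R) :
  injective i -> (forall U, open U -> op (i @` U)) ->
  (forall V, op V -> open (i @^-1` V)) -> op (range i) ->
  compatible_with op d -> compatible_with (@open A) (fun a b => d (i a) (i b)).
Proof.
move=> inj hU hV hR Hc U; split.
  move=> oU a Ua.
  have [e e0 he] := (proj1 (Hc _) (hU _ oU)) (i a) (ex_intro2 _ _ a Ua erefl).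
  exists e => // b /= hb.
  by have [b' Ub' /inj <-] := he _ hb.
move=> hb.
have -> : U = i @^-1` (i @` U).
  apply/seteqP; split => [a Ua|a [b Ub /inj <-//]]; by exists a.
apply: hV; apply/Hc => _ [a Ua <-].
have [e1 e10 he1] := hb a Ua.
have [e2 e20 he2] := (proj1 (Hc _) hR) (i a) (ex_intro2 _ _ a I erefl).
exists (Num.min e1 e2); first by rewrite lt_min e10 e20.
move=> w /=; rewrite lt_min => /andP[h1 h2].
have [b _ wb] := he2 w h2.
subst w; exists b => //; exact: he1.
Qed.

Lemma minle1 {R : realType} (a b : R) : Num.min a b <= a.
Proof. by rewrite ge_min lexx. Qed.
Lemma minle2 {R : realType} (a b : R) : Num.min a b <= b.
Proof. by rewrite ge_min lexx orbT. Qed.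

Lemma collapse (R : realType) (A : topologicalType) (dA : A -> A -> R)
  (f : A -> R) :
  is_metric dA -> compatible_with (@open A) dA -> (forall x, 0 < f x) ->
  (forall x y, f x <= f y + dA x y) ->
  is_metric (fun x y => Num.min (dA x y) (f x + f y)) /\
  compatible_with (@open A) (fun x y => Num.min (dA x y) (f x + f y)).
Proof.
move=> hm Hc fpos flip.
have dge0 := @metric_ge0 R _ _ hm.
case: hm => h0 hs ht.
split; first split.
- move=> x y; split; last first.
    move=> <-; rewrite (proj2 (h0 x x) erefl); have := fpos x; case: (leP 0 (f x + f x)); lra.
  case: (leP (dA x y) (f x + f y)) => h.
    by move/h0.
  move=> e; exfalso; have := fpos x; have := fpos y; lra.
- by move=> x y; rewrite hs addrC.
- move=> x y z.
  have := ht x y z; have := flip x y; have := flip z y; rewrite (hs z y).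
  have := fpos y; have := dge0 x z.
  have := minle1 (dA x z) (f x + f z); have := minle2 (dA x z) (f x + f z).
  case: (leP (dA x y) (f x + f y)); case: (leP (dA y z) (f y + f z)); lra.
move=> U; rewrite Hc; split.
  move=> hb x Ux; have [e e0 he] := hb x Ux.
  exists (Num.min e (f x)); first by rewrite lt_min e0 fpos.
  move=> y /=; rewrite lt_min => /andP[h1 h2]; apply: he => /=.
  move: h1 h2; have := fpos y.
  case: (leP (dA x y) (f x + f y)); lra.
move=> hb x Ux; have [e e0 he] := hb x Ux.
exists e => // y /= hy; apply: he => /=.
exact: le_lt_trans (minle1 _ _) hy.
Qed.

From Stdlib Require Import Classical.

Section Sum.
Variables (R : realType) (X Y : topologicalType) (d : (X + Y)%type -> (X + Y)%type -> R).
Hypothesis hm : is_metric d.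
Hypothesis Hc : compatible_with (@sum_open X Y) d.

Lemma so_inl : sum_open (range (@inl X Y)).
Proof.
split.
  have -> : (@inl X Y) @^-1` range inl = setT.
    by apply/seteqP; split => // a _; exists a.
  exact: openT.
have -> : (@inr X Y) @^-1` range inl = set0.
  by apply/seteqP; split => // a [].
exact: open0.
Qed.

Lemma so_inr : sum_open (range (@inr X Y)).
Proof.
split.
  have -> : (@inl X Y) @^-1` range inr = set0.
    by apply/seteqP; split => // a [].
  exact: open0.
have -> : (@inr X Y) @^-1` range inr = setT.
  by apply/seteqP; split => // a _; exists a.
exact: openT.
Qed.

Lemma compat_l : compatible_with (@open X) (fun a b => d (inl a) (inl b)).
Proof.
apply: compat_restr Hc.
- by move=> a b [].
- move=> U oU; split.
    have -> : (@inl X Y) @^-1` (inl @` U) = U.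
      apply/seteqP; split => [a [b Ub [<-]] //|a Ua]; by exists a.
    exact: oU.
  have -> : (@inr X Y) @^-1` (inl @` U) = set0.
    by apply/seteqP; split => // a [].
  exact: open0.
- by move=> V [].
- exact: so_inl.
Qed.

Lemma compat_r : compatible_with (@open Y) (fun a b => d (inr a) (inr b)).
Proof.
apply: compat_restr Hc.
- by move=> a b [].
- move=> U oU; split.
    have -> : (@inl X Y) @^-1` (inr @` U) = set0.
      by apply/seteqP; split => // a [].
    exact: open0.
  have -> : (@inr X Y) @^-1` (inr @` U) = U.
    apply/seteqP; split => [a [b Ub [<-]] //|a Ua]; by exists a.
  exact: oU.
- by move=> V [].
- exact: so_inr.
Qed.

Lemma metric_l : is_metric (fun a b => d (@inl X Y a) (inl b)).
Proof.
case: hm => h0 hs ht; split => //.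
by move=> x y; rewrite h0; split => [[]|->].
Qed.

Lemma metric_r : is_metric (fun a b => d (@inr X Y a) (inr b)).
Proof.
case: hm => h0 hs ht; split => //.
by move=> x y; rewrite h0; split => [[]|->].
Qed.

Lemma sep_l x : exists2 e : R, 0 < e & forall y, e <= d (inl x) (inr y).
Proof.
have [e e0 he] := (proj1 (Hc _) so_inl) (inl x) (ex_intro2 _ _ x I erefl).
exists e => // y; rewrite leNgt; apply/negP => h.
by have [a _] := he _ h.
Qed.

End Sum.

Lemma negP_ex (R : realType) (X Y G : Type) (F : G -> X -> Y -> R) (c : R) :
  ~ (forall x y, exists g, c < F g x y) -> exists x y, forall g, F g x y <= c.
Proof.
move=> H; apply: NNPP => H'; apply: H => x y; apply: NNPP => H2; apply: H'.
exists x, y => g; rewrite leNgt; apply/negP => h; apply: H2; by exists g.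
Qed.

Lemma mixed (R : realType) (X Y : topologicalType) (G : Type) (one : G)
  (phi : G -> X -> X) (psi : G -> Y -> Y)
  (d : (X + Y)%type -> (X + Y)%type -> R) :
  is_metric d -> compatible_with (@sum_open X Y) d ->
  (forall x, phi one x = x) -> MIE R phi ->
  exists2 c : R, 0 < c & forall x y, exists g,
    c < d (inl (phi g x)) (inr (psi g y)).
Proof.
move=> hm Hc phi1 mie.
have dge0 := @metric_ge0 R _ _ hm.
have [y0|noY] := pselect (exists y : Y, True); last first.
  by exists 1 => // x y; exfalso; apply: noY; exists y.
case: y0 => y0 _.
pose f x := inf [set r | exists y, r = d (inl x) (inr y)].
have flb x y : f x <= d (inl x) (inr y).
  apply: ge_inf; last by exists y.
  by exists 0 => r [y' ->].
have fpos x : 0 < f x.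
  have [e e0 he] := @sep_l R X Y d Hc x.
  apply: lt_le_trans e0 _; apply: lb_le_inf; first by exists (d (inl x) (inr y0)), y0.
  by move=> r [y ->].
have flip x x' : f x <= f x' + d (inl x) (inl x').
  rewrite -lerBlDr; apply: lb_le_inf; first by exists (d (inl x') (inr y0)), y0.
  move=> r [y ->]; rewrite lerBlDr.
  apply: le_trans (flb x y) _.
  case: hm => _ hs ht; rewrite addrC; apply: ht.
have [hm' Hc'] := @collapse R X _ f (@metric_l R X Y d hm) (@compat_l R X Y d Hc) fpos flip.
have [c' c'0 hc'] := mie _ hm' Hc'.
apply: NNPP => H.
have Hn c : 0 < c -> exists x y, forall g, d (inl (phi g x)) (inr (psi g y)) <= c.
  move=> c0; apply: (@negP_ex R X Y G (fun g x y => d (inl (phi g x)) (inr (psi g y)))).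
  by move=> hP; apply: H; exists c.
have [x1 [y1 h1]] := Hn (c' / 4) ltac:(by rewrite divr_gt0).
have [x2 [y2 h2]] := Hn (Num.min (c' / 4) (f x1 / 2))
  ltac:(by rewrite lt_min !divr_gt0 ?fpos).
have ne : x1 <> x2.
  move=> e; subst x2.
  have := h2 one; rewrite phi1 => h.
  have := le_trans (flb x1 (psi one y2)) (le_trans h (minle2 _ _)).
  have := fpos x1; lra.
have [g hg] := hc' _ _ ne.
have := le_trans (flb _ _) (h1 g); have := le_trans (flb _ _) (h2 g).
have := minle1 (c' / 4) (f x1 / 2).
have := minle2 (d (inl (phi g x1)) (inl (phi g x2))) (f (phi g x1) + f (phi g x2)).
move: hg => /=; lra.
Qed.

Theorem mainTheorem7 (R : realType) (X Y : topologicalType)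
  (G : Type) (mul : G -> G -> G) (one : G) (inv : G -> G)
  (phi : G -> X -> X) (psi : G -> Y -> Y) :
  is_group mul one inv ->
  metrizable R X -> locally_compact [set: X] -> sigma_compact X ->
  metrizable R Y -> locally_compact [set: Y] -> sigma_compact Y ->
  is_continuous_action mul one phi -> is_continuous_action mul one psi ->
  MIE R phi -> MIE R psi ->
  MIE_on R (@sum_open X Y) (coprod_action phi psi).
Proof.
move=> _ _ _ _ _ _ _ [[phi1 _] _] [[psi1 _] _] miX miY d hm Hc.
have [c1 c10 h1] := miX _ (@metric_l R X Y d hm) (@compat_l R X Y d Hc).
have [c2 c20 h2] := miY _ (@metric_r R X Y d hm) (@compat_r R X Y d Hc).
have [c3 c30 h3] := @mixed R X Y G one phi psi d hm Hc phi1 miX.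
have hs := let: And3 _ hs _ := hm in hs.
exists (Num.min c1 (Num.min c2 c3)); first by rewrite !lt_min c10 c20 c30.
case=> [a|a] [b|b] ne.
- have [g hg] := h1 a b (fun e => ne (congr1 inl e)).
  exists g => /=; exact: le_lt_trans (minle1 _ _) hg.
- have [g hg] := h3 a b; exists g => /=.
  apply: le_lt_trans hg; apply: le_trans (minle2 _ _) (minle2 _ _).
- have [g hg] := h3 b a; exists g => /=; rewrite hs.
  apply: le_lt_trans hg; apply: le_trans (minle2 _ _) (minle2 _ _).
- have [g hg] := h2 a b (fun e => ne (congr1 inr e)).
  exists g => /=; apply: le_lt_trans hg; apply: le_trans (minle2 _ _) (minle1 _ _).
Qed.
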